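(* Let $k$ be a positive integer, let $d\ge0$ and let $p\in\mathbb{C}[x_1,x_2]$ be homogeneous of degree $d$. Let $0\le i_1,\dots,i_k,j_1,\dots,j_k\le d$ be integers with $\sum_\ell i_\ell=\sum_\ell j_\ell$. Then, in $\mathbb{C}[x_1,x_2,y_1,y_2]$, $$\Delta^{j_1}(p)\cdots\Delta^{j_k}(p)\in\Big\langle\,\Delta^{i_1}(p)\cdots\Delta^{i_k}(p),\ B^{k-1}\cdot(x_1y_2-x_2y_1)\,\Big\rangle,$$ where $B=\{p,\Delta(p),\dots,\Delta^{d}(p),\,x_1y_2-x_2y_1\}$, $B^{k-1}\cdot(x_1y_2-x_2y_1)$ denotes the set of all products of $k-1$ elements of $B$ multiplied by $x_1y_2-x_2y_1$, and $\langle\cdot\rangle$ denotes the generated ideal.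
   Context: $\Delta$ is the polarization operator $\Delta=y_1\,\partial_{x_1}+y_2\,\partial_{x_2}$ acting on $\mathbb{C}[x_1,x_2,y_1,y_2]$, and $\Delta^i$ its $i$-th iterate. *)

(* Defs.v *)
From HB Require Import structures.
From mathcomp Require Import all_boot all_order all_algebra all_field.
Set Implicit Arguments. Unset Strict Implicit. Unset Printing Implicit Defensive.
Import GRing.Theory Num.Theory.
Local Open Scope ring_scope.

(* The polynomial ring R[x1,x2,y1,y2], represented as iterated univariate
   polynomials  R[x1][x2][y1][y2]  (innermost variable x1, outermost y2). *)
Definition P4 (R : comNzRingType) := {poly {poly {poly {poly R}}}}.

Definition X1 (R : comNzRingType) : P4 R := ('X : {poly R})%:P%:P%:P.
Definition X2 (R : comNzRingType) : P4 R := ('X : {poly {poly R}})%:P%:P.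
Definition Y1 (R : comNzRingType) : P4 R := ('X : {poly {poly {poly R}}})%:P.
Definition Y2 (R : comNzRingType) : P4 R := 'X.

Definition Dx1 (R : comNzRingType) (f : P4 R) : P4 R :=
  map_poly (map_poly (map_poly (@deriv R))) f.
Definition Dx2 (R : comNzRingType) (f : P4 R) : P4 R :=
  map_poly (map_poly (@deriv {poly R})) f.

Definition polar (R : comNzRingType) (f : P4 R) : P4 R :=
  Y1 R * Dx1 f + Y2 R * Dx2 f.
Definition polarn (R : comNzRingType) (i : nat) (f : P4 R) : P4 R :=
  iter i (@polar R) f.

(* R[x1,x2] = R[x1][x2] (outer variable x2), embedded as constants in y1,y2. *)
Definition embed2 (R : comNzRingType) (p : {poly {poly R}}) : P4 R := p%:P%:P.

(* p is homogeneous of degree d: every monomial x1^a x2^b occurring in p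
   has a + b = d (the coefficient of x1^a x2^b is (p`_b)`_a). *)
Definition homogeneous (R : comNzRingType) (p : {poly {poly R}}) (d : nat) : Prop :=
  forall a b : nat, (p`_b)`_a != 0 -> (a + b)%N = d.

Definition wdet (R : comNzRingType) : P4 R := X1 R * Y2 R - X2 R * Y1 R.

Definition in_ideal (R : comNzRingType) (G : P4 R -> Prop) (f : P4 R) : Prop :=
  exists s : seq (P4 R * P4 R),
    (forall q, q \in s -> G q.2) /\ f = \sum_(q <- s) q.1 * q.2.

Definition Bset (R : comNzRingType) (P : P4 R) (d : nat) (b : P4 R) : Prop :=
  (exists i : nat, (i <= d)%N /\ b = polarn i P) \/ b = wdet R.

Definition Bpow_w (R : comNzRingType) (P : P4 R) (d m : nat) (h : P4 R) : Prop :=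
  exists bs : seq (P4 R), size bs = m /\ (forall b, b \in bs -> Bset P d b) /\
    h = (\prod_(b <- bs) b) * wdet R.

(* Main.v *)
Require Import Defs.
From HB Require Import structures.
From mathcomp Require Import all_boot all_order all_algebra all_field.
From Stdlib Require Import Ring.
Import GRing.Theory Num.Theory.
Local Open Scope ring_scope.

Section AbsS.
Variable R : comNzRingType.
Definition TT : Type := GRing.ComNzRing.sort R.
Definition ad (x y : TT) : TT := x + y.
Definition mu (x y : TT) : TT := x * y.
Definition ne (x : TT) : TT := - x.
Definition sb (x y : TT) : TT := x - y.
Definition zr : TT := 0.
Definition on : TT := 1.
Lemma Rth : @ring_theory TT zr on ad mu sb ne (@eq TT).
Proof.
constructor; rewrite /ad /mu /ne /sb /zr /on; intros; rewrite ?add0r ?mul1r ?mulr0 //.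
exact: addrC. exact: addrA. exact: mulrC. exact: mulrA. exact: mulrDl. exact: subrr.
Qed.
Add Ring Rr : Rth.
Lemma addE (x y : R) : x + y = ad x y. Proof. by []. Qed.
Lemma mulE (x y : R) : x * y = mu x y. Proof. by []. Qed.
Lemma oppE (x : R) : - x = ne x. Proof. by []. Qed.
Lemma zE : (0 : R) = zr. Proof. by []. Qed.
Lemma oE : (1 : R) = on. Proof. by []. Qed.
Ltac rg := rewrite ?mul0r ?mulr0 ?mul1r ?mulr1 ?addr0 ?add0r ?subr0 ?sub0r;
  rewrite ?addE ?mulE ?oppE; try rewrite zE; try rewrite oE; match goal with |- ?a = ?b => change (@eq TT a b) end; ring.

Lemma add_0 (f : R -> R) (hf : forall a b, f (a + b) = f a + f b) : f 0 = 0.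
Proof. by apply: (addrI (f 0)); rewrite -hf !addr0. Qed.
Lemma add_N (f : R -> R) (hf : forall a b, f (a + b) = f a + f b) a : f (- a) = - f a.
Proof. by apply: (addrI (f a)); rewrite -hf !subrr add_0. Qed.
Lemma add_B (f : R -> R) (hf : forall a b, f (a + b) = f a + f b) a b : f (a - b) = f a - f b.
Proof. by rewrite hf add_N. Qed.
Lemma add_n (f : R -> R) (hf : forall a b, f (a + b) = f a + f b) a n : f (a *+ n) = f a *+ n.
Proof. by elim: n => [|n IH]; rewrite ?mulr0n ?add_0 // !mulrS hf IH. Qed.

Lemma alg_step (A B Q Pc Pa1 W K u : R) (n m : nat) : u * n%:R = 1 ->
  A *+ n * B - Pc *+ m * Pa1 = W * (W * K) ->
  B * (A * Q) = (u * m%:R) * (Pc * (Pa1 * Q)) + u * K * (W * (W * Q)).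
Proof.
move=> hu H.
rewrite -[A *+ n]mulr_natr -[Pc *+ m]mulr_natr in H.
have H' : A * n%:R * B = Pc * m%:R * Pa1 + W * (W * K) by rewrite -H addrC subrK.
transitivity (u * n%:R * (B * (A * Q))); first by rewrite hu mul1r.
transitivity (u * Q * (A * n%:R * B)); first by rg.
rewrite H'; rg.
Qed.

Variables (D1 D2 : R -> R) (x1 x2 y1 y2 : R).
Hypotheses (D1D : forall a b, D1 (a + b) = D1 a + D1 b)
           (D2D : forall a b, D2 (a + b) = D2 a + D2 b)
           (D1M : forall a b, D1 (a * b) = D1 a * b + a * D1 b)
           (D2M : forall a b, D2 (a * b) = D2 a * b + a * D2 b)
           (D12 : forall a, D1 (D2 a) = D2 (D1 a))
           (D1x1 : D1 x1 = 1) (D1x2 : D1 x2 = 0) (D1y1 : D1 y1 = 0) (D1y2 : D1 y2 = 0)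
           (D2x1 : D2 x1 = 0) (D2x2 : D2 x2 = 1) (D2y1 : D2 y1 = 0) (D2y2 : D2 y2 = 0)
           (ninv : forall m, (0 < m)%N -> exists u : R, u * m%:R = 1).

Definition del f := y1 * D1 f + y2 * D2 f.
Definition eul f := x1 * D1 f + x2 * D2 f.
Definition ww := x1 * y2 - x2 * y1.

Lemma delD a b : del (a + b) = del a + del b.
Proof. rewrite /del D1D D2D. rg. Qed.
Lemma delM a b : del (a * b) = del a * b + a * del b.
Proof. rewrite /del D1M D2M. rg. Qed.
Lemma delw : del ww = 0.
Proof.
rewrite /del /ww !(add_B _ D1D) !(add_B _ D2D) !D1M !D2M D1x1 D1x2 D1y1 D1y2 D2x1 D2x2 D2y1 D2y2.
rg.
Qed.
Lemma delwK K : del (ww * K) = ww * del K.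
Proof. by rewrite delM delw mul0r add0r. Qed.

Lemma D1del f : D1 (del f) = del (D1 f).
Proof. rewrite /del D1D !D1M D1y1 D1y2 D12. rg. Qed.
Lemma D2del f : D2 (del f) = del (D2 f).
Proof. rewrite /del D2D !D2M D2y1 D2y2 D12. rg. Qed.
Lemma eul_del f : eul (del f) = del (eul f) - del f.
Proof.
rewrite /eul D1del D2del /del !D1D !D2D !D1M !D2M D1x1 D1x2 D2x1 D2x2 !D12. rg.
Qed.
Lemma eul_D1 f : eul (D1 f) = D1 (eul f) - D1 f.
Proof. rewrite /eul !D1D !D1M D1x1 D1x2 !D12. rg. Qed.
Lemma eul_D2 f : eul (D2 f) = D2 (eul f) - D2 f.
Proof. rewrite /eul !D2D !D2M D2x1 D2x2 !D12. rg. Qed.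

Lemma det_lem f g : eul f * del g - eul g * del f = ww * (D1 f * D2 g - D2 f * D1 g).
Proof. rewrite /eul /del /ww. rg. Qed.


Lemma del_0 : del 0 = 0. Proof. exact: (add_0 del delD). Qed.
Lemma delB a b : del (a - b) = del a - del b. Proof. exact: (add_B del delD). Qed.
Lemma deln a n : del (a *+ n) = del a *+ n. Proof. exact: (add_n del delD). Qed.

Lemma eul_iter f m n a : eul f = f *+ m - f *+ n ->
  eul (iter a del f) = iter a del f *+ m - iter a del f *+ (n + a).
Proof.
move=> H; elim: a => [|a IH]; first by rewrite addn0.
rewrite iterS eul_del IH delB !deln addnS mulrSr.
by rewrite (opprD (del (iter a del f) *+ (n + a))) addrA.
Qed.

Lemma D1_iter f a : D1 (iter a del f) = iter a del (D1 f).
Proof. by elim: a => [|a IH] //; rewrite !iterS D1del IH. Qed.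
Lemma D2_iter f a : D2 (iter a del f) = iter a del (D2 f).
Proof. by elim: a => [|a IH] //; rewrite !iterS D2del IH. Qed.

Definition dvw z := exists K, z = ww * K.
Lemma dvw0 : dvw 0. Proof. by exists 0; rewrite mulr0. Qed.
Lemma dvwB a b : dvw a -> dvw b -> dvw (a - b).
Proof. by move=> [K ->] [L ->]; exists (K - L); rewrite mulrBr. Qed.
Lemma dvwN a : dvw a -> dvw (- a).
Proof. by move=> [K ->]; exists (- K); rewrite mulrN. Qed.
Lemma dvwdel a : dvw a -> dvw (del a).
Proof. by move=> [K ->]; exists (del K); rewrite delwK. Qed.

Variables (p0 : R) (d : nat).
Hypothesis Heul : eul p0 = p0 *+ d.

Definition PP a := iter a del p0.
Definition G1 a := iter a del (D1 p0).
Definition G2 a := iter a del (D2 p0).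
Definition JJ a c := G1 a * G2 c - G2 a * G1 c.

Lemma eulP a : eul (PP a) = PP a *+ d - PP a *+ a.
Proof. rewrite /PP -[in X in _ - X](add0n a); apply: eul_iter. by rewrite Heul mulr0n subr0. Qed.
Lemma eulG1 a : eul (G1 a) = G1 a *+ d - G1 a *+ (1 + a).
Proof. rewrite /G1; apply: eul_iter. by rewrite eul_D1 Heul (add_n D1 D1D) mulr1n. Qed.
Lemma eulG2 a : eul (G2 a) = G2 a *+ d - G2 a *+ (1 + a).
Proof. rewrite /G2; apply: eul_iter. by rewrite eul_D2 Heul (add_n D2 D2D) mulr1n. Qed.

Lemma delJ a c : del (JJ a c) = JJ a.+1 c + JJ a c.+1.
Proof.
rewrite /JJ delB !delM /G1 /G2 -!iterS. rg.
Qed.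

Lemma Jbase a : (a.+2 <= d)%N -> dvw (JJ a a.+1).
Proof.
move=> ha.
have := det_lem (G1 a) (G2 a).
rewrite eulG1 eulG2 -!mulrnBr; [|exact: ltnW|exact: ltnW].
set k := (d - (1 + a))%N.
have kp : (0 < k)%N by rewrite /k subn_gt0.
have [u hu] := ninv _ kp.
move=> H.
exists (u * (D1 (G1 a) * D2 (G2 a) - D2 (G1 a) * D1 (G2 a))).
rewrite mulrCA -H !mulrnAl -mulrnBl mulrnAr -mulrnAl -(mulr_natr u k) hu mul1r.
by rewrite /JJ /G1 /G2 !iterS.
Qed.


Lemma Jdiv_aux N : forall n a, (n <= N)%N -> (a + n < d)%N -> dvw (JJ a (a + n)).
Proof.
elim: N => [|N IH] n a hn ha.
  move: hn; rewrite leqn0 => /eqP ->.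
  by rewrite addn0 /JJ [G2 a * _]mulrC subrr; exact: dvw0.
case: n hn ha => [|[|n]] hn ha.
- by rewrite addn0 /JJ [G2 a * _]mulrC subrr; exact: dvw0.
- by rewrite addn1; apply: Jbase; rewrite -addn1.
have E : JJ a (a + n.+2) = del (JJ a (a + n.+1)) - JJ a.+1 (a + n.+1).
  by rewrite delJ addrC addKr addnS.
rewrite E; apply: dvwB.
  apply: dvwdel; apply: IH; first by [].
  by apply: leq_ltn_trans ha; rewrite leq_add2l.
have -> : (a + n.+1 = a.+1 + n)%N by rewrite addnS addSn.
apply: IH; first exact: leq_trans (leqnSn n) hn.
by rewrite addSn -addnS; apply: leq_trans ha; rewrite ltnS leq_add2l.
Qed.

Lemma Jdiv n a : (a + n < d)%N -> dvw (JJ a (a + n)).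
Proof. exact: (@Jdiv_aux n n a (leqnn n)). Qed.

Lemma JN a c : JJ c a = - JJ a c.
Proof. by rewrite /JJ opprB [G1 c * _]mulrC [G2 c * _]mulrC. Qed.

Lemma Jall a c : (a < d)%N -> (c < d)%N -> dvw (JJ a c).
Proof.
move=> ha hc; case: (leqP a c) => h.
  by rewrite -(subnKC h); apply: Jdiv; rewrite subnKC.
rewrite JN; apply: dvwN; rewrite -(subnKC (ltnW h)); apply: Jdiv; by rewrite subnKC // ltnW.
Qed.

Lemma two_step a c : (a < d)%N -> (c < d)%N ->
  exists K, PP a *+ (d - a) * PP c.+1 - PP c *+ (d - c) * PP a.+1 = ww * (ww * K).
Proof.
move=> ha hc.
have [K HK] := Jall _ _ ha hc.
exists K; rewrite -HK.
have := det_lem (PP a) (PP c).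
rewrite !eulP -(mulrnBr (PP a) (ltnW ha)) -(mulrnBr (PP c) (ltnW hc)).
move=> H; rewrite [LHS]H.
by rewrite /PP !D1_iter !D2_iter.
Qed.

End AbsS.

Set Implicit Arguments. Unset Strict Implicit.
Definition isder (R : comNzRingType) (f : R -> R) :=
  (forall a b, f (a + b) = f a + f b) /\ (forall a b, f (a * b) = f a * b + a * f b).

Lemma isder0 (R : comNzRingType) (f : R -> R) : isder f -> f 0 = 0.
Proof. by case=> hD _; apply: (addrI (f 0)); rewrite -hD !addr0. Qed.

Lemma isder1 (R : comNzRingType) (f : R -> R) : isder f -> f 1 = 0.
Proof. case=> _ hM; have := hM 1 1; rewrite !mulr1 !mul1r => h. by apply: (addrI (f 1)); rewrite -h addr0. Qed.

Lemma isder_n (R : comNzRingType) (f : R -> R) : isder f -> forall a n, f (a *+ n) = f a *+ n.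
Proof.
move=> hf a n; elim: n => [|n IH]; first by rewrite !mulr0n (isder0 hf).
by rewrite !mulrS hf.1 IH.
Qed.

Lemma isder_map (R : comNzRingType) (f : R -> R) : isder f -> isder (map_poly f : {poly R} -> {poly R}).
Proof.
move=> hf; have f0 := isder0 hf; split=> a b; apply/polyP=> i.
  by rewrite coefD !coef_map_id0 // coefD hf.1.
rewrite coef_map_id0 // coefD !coefM.
rewrite (big_morph f hf.1 f0) -big_split /=; apply: eq_bigr => j _.
by rewrite hf.2 !coef_map_id0.
Qed.

Lemma isder_deriv (R : comNzRingType) : isder (@deriv R).
Proof. by split=> a b; rewrite ?derivD ?derivM. Qed.

Lemma map_der_C (R : comNzRingType) (f : R -> R) (f0 : f 0 = 0) (c : R) :
  map_poly f c%:P = (f c)%:P.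
Proof. by apply/polyP=> i; rewrite coef_map_id0 // !coefC; case: (i == 0%N). Qed.

Lemma map_der_X (R : comNzRingType) (f : R -> R) : isder f -> map_poly f 'X = 0.
Proof.
move=> hf; apply/polyP=> i; rewrite coef_map_id0 ?(isder0 hf) // coefX coef0.
by case: (i == 1%N); rewrite ?(isder1 hf) ?(isder0 hf).
Qed.

Lemma map_der_1 (R : comNzRingType) (f : R -> R) : isder f -> map_poly f 1 = 0.
Proof. by move=> hf; rewrite -polyC1 map_der_C ?(isder0 hf) // (isder1 hf). Qed.

Lemma map_comm (R : comNzRingType) (f g : R -> R) (f0 : f 0 = 0) (g0 : g 0 = 0)
  (h : forall x, f (g x) = g (f x)) (p : {poly R}) :
  map_poly f (map_poly g p) = map_poly g (map_poly f p).
Proof. by apply/polyP=> i; rewrite !coef_map_id0 ?h. Qed.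

Lemma map_deriv_comm (R : comNzRingType) (f : R -> R) (hf : isder f) (q : {poly R}) :
  map_poly f (deriv q) = deriv (map_poly f q).
Proof.
by apply/polyP=> i; rewrite coef_map_id0 ?(isder0 hf) // !coef_deriv coef_map_id0 ?(isder0 hf) // (isder_n hf).
Qed.

Section Conc.
Variable C : numClosedFieldType.

Lemma der1 : isder (@Dx1 C).
Proof. exact: (isder_map (isder_map (isder_map (@isder_deriv C)))). Qed.
Lemma der2 : isder (@Dx2 C).
Proof. exact: (isder_map (isder_map (@isder_deriv {poly C}))). Qed.

Lemma D12c (a : P4 C) : Dx1 (Dx2 a) = Dx2 (Dx1 a).
Proof.
rewrite /Dx1 /Dx2; apply: map_comm; rewrite ?map_poly0 // => x.
apply: map_comm; rewrite ?map_poly0 ?deriv0 // => y.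
apply: map_deriv_comm; exact: isder_deriv.
Qed.


Lemma f0_1 : (map_poly (map_poly (@deriv C))) 0 = 0. Proof. by rewrite map_poly0. Qed.

Lemma v11 : Dx1 (X1 C) = 1.
Proof.
have d0 := isder_deriv C. have d1 := isder_map d0. have d2 := isder_map d1.
have e0 := isder_deriv {poly C}. have e1 := isder_map e0.
rewrite /Dx1 /Dx2 /X1 /X2 /Y1 /Y2.
do 3 rewrite map_der_C; first by rewrite derivX !polyC1. all: try by rewrite map_poly0. all: try by rewrite deriv0.
Qed.

Lemma v12 : Dx1 (X2 C) = 0.
Proof.
have d0 := isder_deriv C. have d1 := isder_map d0. have d2 := isder_map d1.
have e0 := isder_deriv {poly C}. have e1 := isder_map e0.
rewrite /Dx1 /Dx2 /X1 /X2 /Y1 /Y2.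
do 2 rewrite map_der_C; first by rewrite (map_der_X d0) !polyC0. all: try by rewrite map_poly0. all: try by rewrite deriv0.
Qed.

Lemma v13 : Dx1 (Y1 C) = 0.
Proof.
have d0 := isder_deriv C. have d1 := isder_map d0. have d2 := isder_map d1.
have e0 := isder_deriv {poly C}. have e1 := isder_map e0.
rewrite /Dx1 /Dx2 /X1 /X2 /Y1 /Y2.
rewrite map_der_C; first by rewrite (map_der_X d1) !polyC0. all: try by rewrite map_poly0. all: try by rewrite deriv0.
Qed.

Lemma v14 : Dx1 (Y2 C) = 0.
Proof.
have d0 := isder_deriv C. have d1 := isder_map d0. have d2 := isder_map d1.
have e0 := isder_deriv {poly C}. have e1 := isder_map e0.
rewrite /Dx1 /Dx2 /X1 /X2 /Y1 /Y2.
exact: (map_der_X d2).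
Qed.

Lemma v21 : Dx2 (X1 C) = 0.
Proof.
have d0 := isder_deriv C. have d1 := isder_map d0. have d2 := isder_map d1.
have e0 := isder_deriv {poly C}. have e1 := isder_map e0.
rewrite /Dx1 /Dx2 /X1 /X2 /Y1 /Y2.
do 2 rewrite map_der_C; first by rewrite derivC !polyC0. all: try by rewrite map_poly0. all: try by rewrite deriv0.
Qed.

Lemma v22 : Dx2 (X2 C) = 1.
Proof.
have d0 := isder_deriv C. have d1 := isder_map d0. have d2 := isder_map d1.
have e0 := isder_deriv {poly C}. have e1 := isder_map e0.
rewrite /Dx1 /Dx2 /X1 /X2 /Y1 /Y2.
do 2 rewrite map_der_C; first by rewrite derivX !polyC1. all: try by rewrite map_poly0. all: try by rewrite deriv0.
Qed.

Lemma v23 : Dx2 (Y1 C) = 0.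
Proof.
have d0 := isder_deriv C. have d1 := isder_map d0. have d2 := isder_map d1.
have e0 := isder_deriv {poly C}. have e1 := isder_map e0.
rewrite /Dx1 /Dx2 /X1 /X2 /Y1 /Y2.
rewrite map_der_C; first by rewrite (map_der_X e0) !polyC0. all: try by rewrite map_poly0. all: try by rewrite deriv0.
Qed.

Lemma v24 : Dx2 (Y2 C) = 0.
Proof.
have d0 := isder_deriv C. have d1 := isder_map d0. have d2 := isder_map d1.
have e0 := isder_deriv {poly C}. have e1 := isder_map e0.
rewrite /Dx1 /Dx2 /X1 /X2 /Y1 /Y2.
exact: (map_der_X e1).
Qed.

Lemma ninvc m : (0 < m)%N -> exists u : P4 C, u * m%:R = 1.
Proof.
move=> hm; exists ((m%:R)^-1 : C)%:P%:P%:P%:P.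
rewrite mulr_natr. do 4 rewrite -polyCMn.
rewrite -(mulr_natr ((m%:R)^-1 : C) m).
have h : ((m%:R)^-1 * m%:R : C) = 1.
  rewrite mulVf //. rewrite pnatr_eq0 -lt0n //.
rewrite h (@polyC1 C) (@polyC1 {poly C}) (@polyC1 {poly {poly C}}) (@polyC1 {poly {poly {poly C}}}).
reflexivity.
Qed.

Lemma Xderiv (R : comNzRingType) (q : {poly R}) a : ('X * deriv q)`_a = q`_a *+ a.
Proof. by rewrite coefXM; case: a => [|a] /=; rewrite ?mulr0n // coef_deriv. Qed.

Lemma eulc (p : {poly {poly C}}) d : homogeneous p d ->
  X1 C * Dx1 (embed2 p) + X2 C * Dx2 (embed2 p) = embed2 p *+ d.
Proof.
move=> hp.
have d0 := isder_deriv C.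
have d1 := isder_map d0.
have d2 := isder_map d1.
have e0 := isder_deriv {poly C}.
have e1 := isder_map e0.
rewrite /Dx1 /Dx2 /X1 /X2 /embed2.
do 3 rewrite map_der_C.
2-4: try (rewrite map_poly0 ?polyC0; reflexivity).
rewrite (@map_der_C _ (@deriv {poly C})); last by rewrite deriv0.
rewrite -polyCM -polyCM -polyCM -polyCM.
rewrite -polyCD -polyCD -polyCMn -polyCMn.
congr (_ %:P); congr (_ %:P).
apply/polyP=> b; rewrite coefD coefCM Xderiv coef_map_id0 ?deriv0 // coefMn.
apply/polyP=> a; rewrite coefD Xderiv !coefMn -mulrnDr.
case: (eqVneq (p`_b)`_a 0) => [->|h]; first by rewrite !mul0rn.
by rewrite (hp _ _ h).
all: try (rewrite deriv0; rewrite ?polyC0; reflexivity).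
Qed.
End Conc.

Lemma ii_add (R : comNzRingType) (G : P4 R -> Prop) f g :
  in_ideal G f -> in_ideal G g -> in_ideal G (f + g).
Proof.
move=> [s [hs ->]] [t [ht ->]]; exists (s ++ t); split; last by rewrite big_cat.
by move=> q; rewrite mem_cat => /orP [/hs|/ht].
Qed.

Lemma ii_mul (R : comNzRingType) (G : P4 R -> Prop) r f :
  in_ideal G f -> in_ideal G (r * f).
Proof.
move=> [s [hs ->]]; exists [seq (r * q.1, q.2) | q <- s]; split.
  by move=> q /mapP [q' hq' ->] /=; exact: hs.
by rewrite big_map mulr_sumr; apply: eq_bigr => q _ /=; rewrite mulrA.
Qed.

Lemma ii_gen (R : comNzRingType) (G : P4 R -> Prop) g : G g -> in_ideal G g.
Proof.
move=> hg; exists [:: (1, g)]; split; last by rewrite big_seq1 mul1r.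
by move=> q; rewrite inE => /eqP ->.
Qed.

Lemma ii_sub (R : comNzRingType) (G1 G2 : P4 R -> Prop) f :
  (forall g, G1 g -> G2 g) -> in_ideal G1 f -> in_ideal G2 f.
Proof. by move=> h [s [hs ->]]; exists s; split => // q /hs /h. Qed.

Lemma sum_lt (k : nat) (f g : 'I_k -> nat) l : (forall j, f j <= g j)%N -> (f l < g l)%N ->
  (\sum_(j < k) f j < \sum_(j < k) g j)%N.
Proof.
move=> h hl; rewrite (bigD1 l) //= [X in (_ < X)%N](bigD1 l) //=.
by rewrite -addSn leq_add // leq_sum.
Qed.

Lemma prod2 (R : comNzRingType) (k : nat) (F : 'I_k -> R) l1 l2 : l1 != l2 ->
  \prod_(l < k) F l = F l1 * (F l2 * \prod_(l in ~: [set l1; l2]) F l).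
Proof.
move=> hne; rewrite (bigD1 l1) //=; congr (_ * _).
rewrite (bigD1 l2) /=; last by rewrite eq_sym.
congr (_ * _); apply: eq_bigl => l; by rewrite !inE negb_or.
Qed.

Lemma sum2 (k : nat) (F : 'I_k -> nat) l1 l2 : l1 != l2 ->
  (\sum_(l < k) F l = F l1 + (F l2 + \sum_(l in ~: [set l1; l2]) F l))%N.
Proof.
move=> hne; rewrite (bigD1 l1) //=; congr (_ + _)%N.
rewrite (bigD1 l2) /=; last by rewrite eq_sym.
congr (_ + _)%N; apply: eq_bigl => l; by rewrite !inE negb_or.
Qed.

Section Main.
Variable C : numClosedFieldType.
Variables (k d : nat) (p : {poly {poly C}}) (hp : homogeneous p d) (i : 'I_k -> nat).

Definition Pn a := polarn a (embed2 p).
Definition BI h := in_ideal (Bpow_w (embed2 p) d k.-1) h.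

Lemma two_stepC a c : (a < d)%N -> (c < d)%N ->
  exists K, Pn a *+ (d - a) * Pn c.+1 - Pn c *+ (d - c) * Pn a.+1 = wdet C * (wdet C * K).
Proof.
move=> ha hc.
exact: (@two_step (P4 C) (@Dx1 C) (@Dx2 C) (X1 C) (X2 C) (Y1 C) (Y2 C)
  (der1 C).1 (der2 C).1 (der1 C).2 (der2 C).2 (@D12c C)
  (v11 C) (v12 C) (v13 C) (v14 C) (v21 C) (v22 C) (v23 C) (v24 C) (@ninvc C)
  (embed2 p) d (eulc hp) a c ha hc).
Qed.

Definition vswap (v : 'I_k -> nat) (l1 l2 : 'I_k) :=
  fun l => if l == l1 then (v l1).-1 else if l == l2 then (v l2).+1 else v l.

Lemma swap_step (v : 'I_k -> nat) (l1 l2 : 'I_k) : l1 != l2 -> (0 < v l1)%N ->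
  (v l1 <= d)%N -> (v l2 < d)%N -> (forall l, v l <= d)%N ->
  exists al h, BI h /\
    \prod_(l < k) Pn (v l) = al * \prod_(l < k) Pn (vswap v l1 l2 l) + h.
Proof.
move=> hne h1 h1d h2 hv.
set a := v l2. set c := (v l1).-1.
have hc1 : c.+1 = v l1 by rewrite /c prednK.
have hcd : (c < d)%N by rewrite hc1.
have [K HK] := two_stepC h2 hcd.
have hda : (0 < d - a)%N by rewrite subn_gt0.
have [u hu] := @ninvc C _ hda.
set S := ~: [set l1; l2].
set Q := \prod_(l in S) Pn (v l).
exists (u * (d - c)%:R), (u * K * (wdet C * (wdet C * Q))).
split.
  apply: ii_mul; apply: ii_gen.
  exists (wdet C :: [seq Pn (v l) | l <- enum S]); split.
    rewrite /= size_map -cardE.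
    have hk := cardsC [set l1; l2]; rewrite cards2 hne card_ord in hk.
    by rewrite -[in RHS]hk add2n.
  split.
    move=> b; rewrite inE => /orP [/eqP ->|/mapP [l _ ->]]; first by right.
    by left; exists (v l); split.
  by rewrite big_cons big_map big_enum /= mulrC.
rewrite (prod2 _ hne) (prod2 (fun l => Pn (vswap v l1 l2 l)) hne).
have -> : \prod_(l in S) Pn (vswap v l1 l2 l) = Q.
  apply: eq_bigr => l; rewrite !inE negb_or => /andP [n1 n2].
  by rewrite /vswap (negbTE n1) (negbTE n2).
have n21 : (l2 == l1) = false by rewrite eq_sym (negbTE hne).
rewrite /vswap eqxx n21 eqxx -hc1.
exact: alg_step hu HK.
Qed.


Variable (hi : forall l, (i l <= d)%N).

Lemma BI0 : BI 0.
Proof. by exists [::]; split => //; rewrite big_nil. Qed.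

Lemma base_case (v : 'I_k -> nat) :
  (\sum_(l < k) v l = \sum_(l < k) i l)%N -> (forall l, ~~ (i l < v l))%N ->
  exists c, BI (\prod_(l < k) Pn (v l) - c * \prod_(l < k) Pn (i l)).
Proof.
move=> hs hno.
case: (pickP (fun l => v l < i l)%N) => [l2 hl2 | hno2].
  have : (\sum_(l < k) v l < \sum_(l < k) i l)%N.
    by apply: (sum_lt (l := l2)) => // j; rewrite leqNgt hno.
  by rewrite hs ltnn.
have E : forall l, v l = i l.
  move=> l; apply/eqP; rewrite eqn_leq leqNgt hno /= leqNgt; by have := hno2 l => /= ->.
exists 1; rewrite mul1r (eq_bigr (fun l => Pn (i l))) ?subrr; first exact: BI0.
by move=> l _; rewrite E.
Qed.

Lemma claim n : forall v : 'I_k -> nat, (forall l, v l <= d)%N ->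
  (\sum_(l < k) v l = \sum_(l < k) i l)%N -> (\sum_(l < k) (v l - i l) <= n)%N ->
  exists c, BI (\prod_(l < k) Pn (v l) - c * \prod_(l < k) Pn (i l)).
Proof.
elim: n => [|n IH] v hv hs he;
  (case: (pickP (fun l => i l < v l)%N) => [l1 hl1 | hno]; last by apply: base_case => // l; exact: (negbT (hno l))).
  have : (0 < \sum_(l < k) (v l - i l))%N.
    by rewrite (bigD1 l1) //= addn_gt0 subn_gt0 hl1.
  by rewrite lt0n -leqn0 he.
case: (pickP (fun l => v l < i l)%N) => [l2 hl2 | hno2]; last first.
  have : (\sum_(l < k) i l < \sum_(l < k) v l)%N.
    by apply: (sum_lt (l := l1)) => // j; rewrite leqNgt; have := hno2 j => /= ->.
  by rewrite hs ltnn.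
have hne : l1 != l2.
  apply/eqP => e; move: hl1 hl2; rewrite e => h1 h2.
  by move: (ltn_trans h1 h2); rewrite ltnn.
have hv1 : (0 < v l1)%N by apply: leq_ltn_trans hl1.
have hv2 : (v l2 < d)%N by apply: leq_trans hl2 (hi l2).
have [al [h [hBI heq]]] := swap_step hne hv1 (hv l1) hv2 hv.
set v' := vswap v l1 l2.
have n21 : (l2 == l1) = false by rewrite eq_sym (negbTE hne).
have hv' : forall l, (v' l <= d)%N.
  move=> l; rewrite /v' /vswap; case: (l == l1).
    by apply: leq_trans (hv l1); rewrite leq_pred.
  by case: (l == l2); [apply: leq_trans (hi l2)|].
have hs' : (\sum_(l < k) v' l = \sum_(l < k) i l)%N.
  rewrite -hs (sum2 _ hne) (sum2 v hne).
  have -> : (\sum_(l in ~: [set l1; l2]) v' l = \sum_(l in ~: [set l1; l2]) v l)%N.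
    apply: eq_bigr => l; rewrite !inE negb_or => /andP [n1 n2].
    by rewrite /v' /vswap (negbTE n1) (negbTE n2).
  rewrite /v' /vswap eqxx n21 eqxx addSn addnS -addSn prednK //.
have he' : (\sum_(l < k) (v' l - i l) <= n)%N.
  rewrite -ltnS; apply: leq_trans he; apply: (sum_lt (l := l1)).
    move=> l; rewrite /v' /vswap; case: (eqVneq l l1) => [->|_].
      by apply: leq_sub2r; rewrite leq_pred.
    case: (eqVneq l l2) => [->|_] //.
    by have -> : ((v l2).+1 - i l2 = 0)%N by apply/eqP; rewrite subn_eq0.
  rewrite /v' /vswap eqxx.
  by rewrite -(prednK hv1) subSn // -ltnS prednK.
have [c' hc'] := IH v' hv' hs' he'.
exists (al * c').
have -> : \prod_(l < k) Pn (v l) - al * c' * \prod_(l < k) Pn (i l) =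
  al * (\prod_(l < k) Pn (v' l) - c' * \prod_(l < k) Pn (i l)) + h.
  by rewrite heq mulrBr mulrA addrAC.
by apply: ii_add => //; apply: ii_mul.
Qed.

End Main.

Unset Implicit Arguments.
Set Strict Implicit.

Theorem lemma3p16 (C : numClosedFieldType) (k d : nat) (hk : (0 < k)%N)
  (p : {poly {poly C}}) (hp : homogeneous p d)
  (i j : 'I_k -> nat) (hi : forall l, (i l <= d)%N) (hj : forall l, (j l <= d)%N)
  (hsum : (\sum_(l < k) i l)%N = (\sum_(l < k) j l)%N) :
  in_ideal
    (fun g => g = \prod_(l < k) polarn (i l) (embed2 p)
              \/ Bpow_w (embed2 p) d k.-1 g)
    (\prod_(l < k) polarn (j l) (embed2 p)).
Proof.
have [c hc] := claim hp hi hj (esym hsum) (leqnn _).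
rewrite /BI /Pn in hc.
rewrite -(subrK (c * \prod_(l < k) polarn (i l) (embed2 p)) (\prod_(l < k) polarn (j l) (embed2 p))).
apply: ii_add.
  by apply: ii_sub hc => g hg; right.
by apply: ii_mul; apply: ii_gen; left.
Qed.
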